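(* Let $h:[\ell,r]\to\mathbb{R}$ be a continuous concave function, $s>0$, and $P\subset\mathrm{xExt}(h)$ a set with $\ell,r\in P$ such that for every $y\in\mathrm{xExt}(h)$ there is $x\in P$ with $|x-y|<s$. Suppose $|h'_\pm|\leq m$ for some $m\geq0$, and let $\bar{h}:[\ell,r]\to\mathbb{R}$ be a concave function with $\bar{h}(x)\geq h(x)$ for all $x\in P$. Then $\bar{h}(x)+2ms\geq h(x)$ for all $x\in[\ell,r]$.
   Context: $h'_\pm(x)=\lim_{y\to x^\pm}\frac{h(y)-h(x)}{y-x}$ are the one-sided derivatives. $\mathrm{xExt}(h)=\{\ell,r\}\cup\{x\in(\ell,r): h|_{[x-\delta,x+\delta]}\text{ is not linear for any }\delta>0\}$. *)

(* Defs.v *)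
From HB Require Import structures.
From mathcomp Require Import all_boot all_order all_algebra.
From mathcomp Require Import all_classical all_reals all_analysis.
Set Implicit Arguments. Unset Strict Implicit. Unset Printing Implicit Defensive.
Import Order.TTheory GRing.Theory Num.Theory.
Import numFieldNormedType.Exports.
Local Open Scope classical_set_scope.
Local Open Scope ring_scope.

Definition concave_on {R : realType} (l r : R) (h : R -> R) : Prop :=
  forall x y t : R, l <= x <= r -> l <= y <= r -> 0 <= t <= 1 ->
    t * h x + (1 - t) * h y <= h (t * x + (1 - t) * y).

Definition right_deriv {R : realType} (h : R -> R) (x d : R) : Prop :=
  (fun y => (h y - h x) / (y - x)) @ x^'+ --> d.

Definition left_deriv {R : realType} (h : R -> R) (x d : R) : Prop :=
  (fun y => (h y - h x) / (y - x)) @ x^'- --> d.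

Definition affine_on {R : realType} (a b : R) (h : R -> R) : Prop :=
  exists c0 c1 : R, forall y, a <= y <= b -> h y = c1 * y + c0.

Definition xExt {R : realType} (l r : R) (h : R -> R) : set R :=
  [set x | x = l \/ x = r \/
     (l < x < r /\ forall delta : R, 0 < delta ->
        l <= x - delta -> x + delta <= r -> ~ affine_on (x - delta) (x + delta) h)].

(* Main.v *)
Require Import Defs.
From HB Require Import structures.
From mathcomp Require Import all_boot all_order all_algebra.
From mathcomp Require Import all_classical all_reals all_analysis.
From mathcomp Require Import ring lra.
Import Order.TTheory GRing.Theory Num.Theory.
Import numFieldNormedType.Exports.
Local Open Scope classical_set_scope.
Local Open Scope ring_scope.

Lemma SL1 (R : realType) (l r : R) (h : R -> R) (m : R) :
  concave_on l r h ->
  (forall x, l <= x < r -> exists d, right_deriv h x d /\ `|d| <= m) ->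
  forall y z, l <= y -> y < z -> z <= r -> h z - h y <= m * (z - y).
Proof.
move=> hc hd y z ly yz zr.
have yr : y < r by apply: lt_le_trans zr.
have [d [Hd dm]] := hd y (introT andP (conj ly yr)).
rewrite leNgt; apply/negP => Hlt.
have zy0 : 0 < z - y by rewrite subr_gt0.
set c := (h z - h y)/(z-y).
have dc : d < c.
  apply: (le_lt_trans (ler_norm d)); apply: (le_lt_trans dm).
  by rewrite /c ltr_pdivlMr.
have H1 := cvgr_lt _ Hd c dc.
have : \forall w \near y^'+, ((h w - h y)/(w-y) < c) /\ (y < w) /\ (w < z).
  near=> w; split; [near: w; exact: H1| split; near: w; [exact: nbhs_right_gt | exact: nbhs_right_lt]].
move=> Hn; have [w [H1w [yw wz]]] := @filter_ex _ (y^'+) _ _ Hn.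
have wy0 : 0 < w - y by rewrite subr_gt0.
have t01 : 0 <= (z-w)/(z-y) <= 1.
  apply/andP; split; first by apply: divr_ge0; lra.
  by rewrite ler_pdivrMr //; lra.
have := hc y z ((z-w)/(z-y)) (introT andP (conj ly (ltW yr))) (introT andP (conj (ltW (le_lt_trans ly yz)) zr)) t01.
have -> : (z - w) / (z - y) * y + (1 - (z - w) / (z - y)) * z = w.
  by field; lra.
have E : c * (w - y) = (1 - (z - w) / (z - y)) * (h z - h y).
  by rewrite /c; field; lra.
move: H1w; rewrite ltr_pdivrMr // => H1w.
set t := (z - w) / (z - y) in E *.
move=> Hc.
have : h w - h y >= (1 - t) * (h z - h y) by lra.
lra.
Unshelve. all: by end_near.
Qed.

Lemma SL2 (R : realType) (l r : R) (h : R -> R) (m : R) :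
  concave_on l r h ->
  (forall x, l < x <= r -> exists d, left_deriv h x d /\ `|d| <= m) ->
  forall y z, l <= y -> y < z -> z <= r -> h y - h z <= m * (z - y).
Proof.
move=> hc hd y z ly yz zr.
have lz : l < z by apply: le_lt_trans yz.
have [d [Hd dm]] := hd z (introT andP (conj lz zr)).
rewrite leNgt; apply/negP => Hlt.
have zy0 : 0 < z - y by rewrite subr_gt0.
set c := (h z - h y)/(z-y).
have dc : c < d.
  have : - m <= d by move: dm; rewrite ler_norml => /andP[].
  apply: lt_le_trans.
  by rewrite /c ltr_pdivrMr //; lra.
have H1 := cvgr_gt _ Hd c dc.
have : \forall w \near z^'-, (c < (h w - h z)/(w-z)) /\ (y < w) /\ (w < z).
  near=> w; split; [near: w; exact: H1| split; near: w; [exact: nbhs_left_gt | exact: nbhs_left_lt]].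
move=> Hn; have [w [H1w [yw wz]]] := @filter_ex _ (z^'-) _ _ Hn.
have zw0 : 0 < z - w by rewrite subr_gt0.
have t01 : 0 <= (z-w)/(z-y) <= 1.
  apply/andP; split; first by apply: divr_ge0; lra.
  by rewrite ler_pdivrMr //; lra.
have := hc y z ((z-w)/(z-y)) (introT andP (conj ly (ltW (lt_le_trans yz zr)))) (introT andP (conj (ltW lz) zr)) t01.
have -> : (z - w) / (z - y) * y + (1 - (z - w) / (z - y)) * z = w.
  by field; lra.
have E : c * (z - w) = (z - w) / (z - y) * (h z - h y).
  by rewrite /c; field; lra.
have E2 : (h w - h z) / (w - z) = (h z - h w) / (z - w).
  by field; lra.
move: H1w; rewrite E2 ltr_pdivlMr // => H1w.
set t := (z - w) / (z - y) in E *.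
move=> Hc.
lra.
Unshelve. all: by end_near.
Qed.
Lemma Kbound (R : realFieldType) (m p1 p2 w hw h1 h2 sg : R) : p1 < p2 -> p1 <= w -> w <= p2 -> 0 <= m ->
  hw - h1 <= m * (w-p1) -> hw - h2 <= m * (p2-w) -> sg * (p2-p1) = h2 - h1 ->
  hw - h1 - sg * (w-p1) <= 2 * m * (w-p1) /\ hw - h1 - sg * (w-p1) <= 2 * m * (p2-w).
Proof.
move=> p12 p1w wp2 m0 HA HB Hs.
set F := hw - h1 - sg * (w-p1).
have FD : F * (p2 - p1) = (hw - h1) * (p2 - w) + (hw - h2) * (w - p1).
  rewrite /F. have -> : h2 = h1 + sg * (p2 - p1) by lra. ring.
have D0 : 0 < p2 - p1 by lra.
have a0 : 0 <= w - p1 by lra.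
have b0 : 0 <= p2 - w by lra.
have T1 : (hw - h1) * (p2 - w) <= m * (w - p1) * (p2 - w) by apply: ler_wpM2r.
have T2 : (hw - h2) * (w - p1) <= m * (p2 - w) * (w - p1) by apply: ler_wpM2r.
have ma : 0 <= m * (w - p1) by apply: mulr_ge0.
have mb : 0 <= m * (p2 - w) by apply: mulr_ge0.
have T3 : m * (w - p1) * (p2 - w) <= m * (w - p1) * (p2 - p1) by apply: ler_wpM2l => //; lra.
have T4 : m * (p2 - w) * (w - p1) <= m * (p2 - w) * (p2 - p1) by apply: ler_wpM2l => //; lra.
split.
- rewrite -(ler_pM2r D0) FD.
  have -> : 2 * m * (w - p1) * (p2 - p1) = m * (w - p1) * (p2 - p1) + m * (w - p1) * (p2 - p1) by ring.
  have : m * (p2 - w) * (w - p1) = m * (w - p1) * (p2 - w) by ring.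
  lra.
- rewrite -(ler_pM2r D0) FD.
  have -> : 2 * m * (p2 - w) * (p2 - p1) = m * (p2 - w) * (p2 - p1) + m * (p2 - w) * (p2 - p1) by ring.
  have : m * (p2 - w) * (w - p1) = m * (w - p1) * (p2 - w) by ring.
  lra.
Qed.
Lemma aff_sub (R : realType) (a b c d : R) h :
  affine_on a b h -> a <= c -> d <= b -> affine_on c d h.
Proof.
move=> [c0 [c1 H]] ac db; exists c0, c1 => y /andP[cy yd]; apply: H.
by apply/andP; split; [apply: le_trans cy|apply: le_trans db].
Qed.

Lemma aff_merge (R : realType) (a b c d : R) h :
  affine_on a b h -> affine_on c d h -> a <= c -> c < b -> b <= d -> affine_on a d h.
Proof.
move=> [c0 [c1 H1]] [e0 [e1 H2]] ac cb bd.
have Hc1 := H1 c (introT andP (conj ac (ltW cb))).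
have Hc2 := H2 c (introT andP (conj (lexx c) (ltW (lt_le_trans cb bd)))).
have Hb1 := H1 b (introT andP (conj (ltW (le_lt_trans ac cb)) (lexx b))).
have Hb2 := H2 b (introT andP (conj (ltW cb) bd)).
have E : (c1 - e1) * (b - c) = 0.
  have : c1 * c + c0 = e1 * c + e0 by rewrite -Hc1 -Hc2.
  have : c1 * b + c0 = e1 * b + e0 by rewrite -Hb1 -Hb2.
  move=> X Y.
  have -> : (c1 - e1) * (b - c) = (c1 * b + c0 - (e1 * b + e0)) - (c1 * c + c0 - (e1 * c + e0)) by ring.
  lra.
have ce : c1 = e1.
  move: E => /eqP; rewrite mulf_eq0 => /orP[/eqP|/eqP]; first by move=> /eqP; rewrite subr_eq0 => /eqP.
  move=> Hbc; exfalso; move: cb; rewrite -subr_gt0 Hbc ltxx //.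
have c00 : c0 = e0 by move: Hc1; rewrite Hc2 ce; lra.
exists c0, c1 => y /andP[ay yd].
case: (leP y b) => yb.
  by apply: H1; apply/andP.
rewrite ce c00; apply: H2; apply/andP; split => //.
by apply: ltW; apply: lt_trans yb.
Qed.

Lemma aff_glue (R : realType) (u v : R) h : u <= v ->
  (forall y, u <= y <= v -> exists δ, 0 < δ /\ affine_on (y - δ) (y + δ) h) ->
  affine_on u v h.
Proof.
move=> uv Hloc.
set S := [set w | u <= w <= v /\ affine_on u w h].
have Su : S u.
  split; first by apply/andP; split.
  exists (h u), 0; move=> y /andP[a b]; have -> : y = u by apply/eqP; rewrite eq_le b a.
  by rewrite mul0r add0r.
have hS : has_sup S.
  split; first by exists u.
  by exists v => w [/andP[_ ->]].
set ws := sup S.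
have uws : u <= ws by apply: sup_upper_bound.
have wsv : ws <= v by apply: ge_sup; [exists u | move=> w [/andP[_ ->]]].
have [δ [δ0 Hδ]] := Hloc ws (introT andP (conj uws wsv)).
have [w Sw ww] := sup_adherent δ0 hS.
case: Sw => /andP[uw wv] Hw.
have wws : w <= ws by apply: (sup_upper_bound hS); split => //; apply/andP.
have Haff : affine_on u (ws + δ) h.
  case: (leP (ws - δ) u) => Hu.
    by apply: aff_sub Hδ Hu _.
  apply: aff_merge Hw Hδ _ ww _; first exact: ltW.
  lra.
case: (leP (ws + δ) v) => Hv.
  have : S (ws + δ) by split => //; apply/andP; split => //; lra.
  move=> /(sup_upper_bound hS); rewrite -/ws; lra.
by apply: aff_sub Haff _ _ => //; apply: ltW.
Qed.

Theorem mainTheorem20 (R : realType) (l r : R) (h hbar : R -> R) (s m : R)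
  (P : set R) :
  {within `[l, r], continuous h} ->
  concave_on l r h ->
  0 < s ->
  P `<=` xExt l r h ->
  P l -> P r ->
  (forall y, xExt l r h y -> exists x, P x /\ `|x - y| < s) ->
  0 <= m ->
  (forall x, l <= x < r -> exists d, right_deriv h x d /\ `|d| <= m) ->
  (forall x, l < x <= r -> exists d, left_deriv h x d /\ `|d| <= m) ->
  concave_on l r hbar ->
  (forall x, P x -> h x <= hbar x) ->
  forall x, l <= x <= r -> h x <= hbar x + 2 * m * s.
Proof.
move=> hcont hc s0 PX Pl Pr Hnear m0 hdr hdl hbc hPb x /andP[lx xr].
have lr : l <= r by apply: le_trans xr.
have inP : forall p, P p -> l <= p <= r.
  move=> p /PX [->|[->|[/andP[a b] _]]]; apply/andP; split => //; exact: ltW.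
have [Px|nPx] := pselect (P x).
  have := hPb x Px.
  have : 0 <= 2 * m * s by apply: mulr_ge0; [lra|exact: ltW].
  lra.
set A := [set p | P p /\ p <= x].
set B := [set p | P p /\ x <= p].
have hA : has_sup A by split; [exists l; split | exists x => p [_]].
have hB : has_inf B by split; [exists r; split | exists x => p [_]].
set a := sup A. set b := inf B.
have la : l <= a by apply: (sup_upper_bound hA); split.
have ax : a <= x by apply: ge_sup; [exists l; split | move=> p [_]].
have xb : x <= b by apply: lb_le_inf; [exists r; split | move=> p [_]].
have br : b <= r by apply: (ge_inf hB.2); split.
have noP : forall p, P p -> a < p -> p < b -> False.
  move=> p Pp ap pb; case: (leP p x) => px.
  - have : p <= a by apply: (sup_upper_bound hA); split.
    lra.
  - have : b <= p by apply: (ge_inf hB.2); split => //; apply: ltW.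
    lra.
apply/ler_addgt0Pr => e e0.
have m1 : 0 < 2 * m + 1 by lra.
set eps := e / (2 * m + 1).
have eps0 : 0 < eps by apply: divr_gt0.
have epsE : eps * (2 * m + 1) = e by rewrite /eps; field; rewrite gt_eqF.
have [p1 [Pp1 p1x] p1a] := sup_adherent eps0 hA.
have [p2 [Pp2 xp2] p2b] := inf_adherent eps0 hB.
rewrite -/a in p1a; rewrite -/b in p2b.
have p1x' : p1 < x.
  by rewrite lt_neqAle p1x andbT; apply/eqP => E; apply: nPx; rewrite -E.
have xp2' : x < p2.
  by rewrite lt_neqAle xp2 andbT; apply/eqP => E; apply: nPx; rewrite E.
have p1a' : p1 <= a by apply: (sup_upper_bound hA); split.
have p2b' : b <= p2 by apply: (ge_inf hB.2); split.
have /andP[lp1 p1r] := inP p1 Pp1.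
have /andP[lp2 p2r] := inP p2 Pp2.
have p12 : p1 < p2 by apply: lt_trans p1x' xp2'.
set sg := (h p2 - h p1) / (p2 - p1).
have sgE : sg * (p2 - p1) = h p2 - h p1 by rewrite /sg; field; lra.
have Kw : forall w, p1 <= w -> w <= p2 ->
    h w - h p1 - sg * (w - p1) <= 2 * m * (w - p1) /\
    h w - h p1 - sg * (w - p1) <= 2 * m * (p2 - w).
  move=> w p1w wp2; apply: (@Kbound _ m p1 p2 w (h w) (h p1) (h p2) sg) => //.
  - case: (leP w p1) => wp1.
      have -> : w = p1 by apply/eqP; rewrite eq_le wp1 p1w.
      by rewrite !subrr mulr0.
    exact: (@SL1 _ l r h m hc hdr p1 w lp1 wp1 (le_trans wp2 p2r)).
  - case: (leP p2 w) => wp.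
      have -> : w = p2 by apply/eqP; rewrite eq_le wp wp2.
      by rewrite !subrr mulr0.
    exact: (@SL2 _ l r h m hc hdl w p2 (le_trans lp1 p1w) wp p2r).
have Hb : h p1 + sg * (x - p1) <= hbar x.
  set t := (p2 - x) / (p2 - p1).
  have t0 : 0 <= t by apply: divr_ge0; lra.
  have t1 : t <= 1 by rewrite /t ler_pdivrMr; lra.
  have := hbc p1 p2 t (inP p1 Pp1) (inP p2 Pp2) (introT andP (conj t0 t1)).
  have -> : t * p1 + (1 - t) * p2 = x by rewrite /t; field; lra.
  have H1 := hPb p1 Pp1; have H2 := hPb p2 Pp2.
  have E1 : t * h p1 <= t * hbar p1 by apply: ler_wpM2l.
  have E2 : (1 - t) * h p2 <= (1 - t) * hbar p2 by apply: ler_wpM2l; lra.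
  have E3 : t * h p1 + (1 - t) * h p2 = h p1 + sg * (x - p1).
    by rewrite /t /sg; field; lra.
  lra.
suff HF : h x - h p1 - sg * (x - p1) <= 2 * m * (s + eps).
  have : eps * (2 * m + 1) = 2 * m * eps + eps by ring.
  have : 2 * m * (s + eps) = 2 * m * s + 2 * m * eps by ring.
  lra.
have Hme : forall q, q <= s + eps -> 2 * m * q <= 2 * m * (s + eps).
  by move=> q hq; apply: ler_wpM2l => //; lra.
case: (leP (x - p1) (s + eps)) => c1.
  exact: le_trans (Kw x (ltW p1x') (ltW xp2')).1 (Hme _ c1).
case: (leP (p2 - x) (s + eps)) => c2.
  exact: le_trans (Kw x (ltW p1x') (ltW xp2')).2 (Hme _ c2).
set u := a + s. set v := b - s.
have ux : u < x by rewrite /u; lra.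
have xv : x < v by rewrite /v; lra.
have Hloc : forall y, u <= y <= v -> exists δ, 0 < δ /\ affine_on (y - δ) (y + δ) h.
  move=> y /andP[uy yv].
  have ly : l < y by rewrite /u in uy; lra.
  have yr : y < r by rewrite /v in yv; lra.
  have nX : ~ xExt l r h y.
    move=> /Hnear [p [Pp]]; rewrite ltr_norml => /andP[q1 q2].
    apply: (noP p Pp); rewrite /u /v in uy yv; lra.
  apply: contrapT => nE; apply: nX; right; right; split; first by apply/andP.
  by move=> δ δ0 _ _ Haff; apply: nE; exists δ.
have [c0 [c1' Hc]] := @aff_glue _ u v h (ltW (lt_trans ux xv)) Hloc.
have Fu := (Kw u ltac:(rewrite /u; lra) ltac:(lra)).1.
have Fv := (Kw v ltac:(lra) ltac:(rewrite /v; lra)).2.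
have Mu := Hme (u - p1) ltac:(rewrite /u; lra).
have Mv := Hme (p2 - v) ltac:(rewrite /v; lra).
rewrite (Hc u ltac:(apply/andP; split; lra)) in Fu.
rewrite (Hc v ltac:(apply/andP; split; lra)) in Fv.
rewrite (Hc x ltac:(apply/andP; split; lra)).
case: (leP 0 (c1' - sg)) => sgn.
  have : (c1' - sg) * x <= (c1' - sg) * v by apply: ler_wpM2l => //; lra.
  lra.
have : (c1' - sg) * x <= (c1' - sg) * u by apply: ler_wnM2l; lra.
lra.
Qed.
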